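(* For $1\le i\le s$ let ${\mathcal B}_i$ be a finite $w_{\mathfrak P_i}$-reduced family of nonzero elements of $L$, and let $z_i\in L^*$ be such that for every $b\in{\mathcal B}_i$, $$w_{\mathfrak P_i}(z_ib)<w_{\mathfrak P_j}(z_ib)\quad\text{for all } j\in\{1,\dots,s\}\setminus\{i\}.$$ Then the family $\bigcup_{i=1}^s z_i{\mathcal B}_i=(z_ib)_{1\le i\le s,\ b\in{\mathcal B}_i}$ is $w_S$-reduced.
   Context: Let $A$ be a Dedekind domain with fraction field $K$, $\mathfrak p$ a nonzero prime ideal with valuation $v_\mathfrak p$. Let $f\in A[x]$ be monic irreducible separable, $\theta$ a root, $L=K(\theta)$, $\mathcal O$ the integral closure of $A$ in $L$, and $S=\{\mathfrak P_1,\dots,\mathfrak P_s\}$ the set of all primes of $\mathcal O$ over $\mathfrak p$, with ramification indices $e_i$ and normalized valuations $v_{\mathfrak P_i}$; $w_{\mathfrak P_i}=v_{\mathfrak P_i}/e_i$ and $w_S(z)=\min_iw_{\mathfrak P_i}(z)$. A finite family ${\mathcal B}\subset L$ is $w$-reduced if $w(\sum_b\lambda_bb)=\min_bw(\lambda_bb)$ for all $\lambda_b\in K$. *)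

(* Defs.v *)
From HB Require Import structures.
From mathcomp Require Import all_boot all_order all_algebra all_field.
Set Implicit Arguments. Unset Strict Implicit. Unset Printing Implicit Defensive.
Import Order.TTheory GRing.Theory Num.Theory.
Local Open Scope ring_scope.

(* Value group Q together with +infinity (the value of 0). *)
Inductive ext := Fin of rat | Inf.

Definition eadd (x y : ext) : ext :=
  match x, y with Fin a, Fin b => Fin (a + b) | _, _ => Inf end.
Definition ele (x y : ext) : bool :=
  match x, y with
  | Fin a, Fin b => (a <= b)%R
  | _, Inf => true
  | Inf, Fin _ => false
  end.
Definition elt (x y : ext) : bool :=
  match x, y with
  | Fin a, Fin b => (a < b)%R
  | Fin _, Inf => true
  | Inf, _ => false
  end.
Definition emin (x y : ext) : ext := if ele x y then x else y.
Definition eminl (s : seq ext) : ext := foldr emin Inf s.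

Definition is_valuation (R : nzRingType) (w : R -> ext) : Prop :=
  [/\ forall x, w x = Inf <-> x = 0,
      forall x y, w (x * y) = eadd (w x) (w y)
    & forall x y, ele (emin (w x) (w y)) (w (x + y))].

Definition is_normalized_discrete_valuation (K : fieldType) (v : K -> ext) : Prop :=
  [/\ is_valuation v,
      forall x, x != 0 -> exists n : int, v x = Fin (n%:~R)
    & exists x, v x = Fin 1].

Definition extends (K : fieldType) (L : fieldExtType K) (w : L -> ext) (v : K -> ext) :=
  forall a : K, w (a%:A) = v a.

Definition wS (K : fieldType) (L : fieldExtType K) (s : nat) (w : 'I_s -> L -> ext)
  (z : L) : ext := eminl [seq w i z | i <- enum 'I_s].

Definition reduced (K : fieldType) (L : fieldExtType K) (w : L -> ext)
  (I : finType) (F : I -> L) : Prop :=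
  forall lam : I -> K,
    w (\sum_(b : I) lam b *: F b) = eminl [seq w (lam b *: F b) | b <- enum I].

(* Main.v *)
Require Import Defs.
From HB Require Import structures.
From mathcomp Require Import all_boot all_order all_algebra all_field.
Import Order.TTheory GRing.Theory Num.Theory.
Set Implicit Arguments. Unset Strict Implicit.
Local Open Scope ring_scope.

Lemma ele_refl x : ele x x.
Proof. by case: x => //= a; rewrite lexx. Qed.
Lemma ele_trans x y t : ele x y -> ele y t -> ele x t.
Proof. by case: x; case: y; case: t => //= a b c; apply: le_trans. Qed.
Lemma ele_total x y : ele x y || ele y x.
Proof. by case: x; case: y => //= a b; apply: le_total. Qed.
Lemma elt_ele x y : elt x y -> ele x y.
Proof. by case: x; case: y => //= a b; apply: ltW. Qed.
Lemma elt_ele_trans x y t : elt x y -> ele y t -> elt x t.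
Proof. by case: x; case: y; case: t => //= a b c; apply: lt_le_trans. Qed.
Lemma ele_elt_trans x y t : ele x y -> elt y t -> elt x t.
Proof. by case: x; case: y; case: t => //= a b c; apply: le_lt_trans. Qed.
Lemma elt_nle x y : elt x y -> ele y x -> False.
Proof. by case: x; case: y => //= a b; rewrite leNgt => ->. Qed.
Lemma ele_emin e a b : ele e a -> ele e b -> ele e (emin a b).
Proof. by rewrite /emin; case: ifP. Qed.
Lemma emin_l a b : ele (emin a b) a.
Proof. by rewrite /emin; case: ifP => [_|H]; [apply: ele_refl|move: (ele_total a b); rewrite H]. Qed.
Lemma emin_r a b : ele (emin a b) b.
Proof. by rewrite /emin; case: ifP => // _; apply: ele_refl. Qed.

Lemma eminl_le (T : eqType) (f : T -> ext) r y : y \in r ->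
  ele (eminl [seq f x | x <- r]) (f y).
Proof.
elim: r => //= a r IH; rewrite inE => /orP[/eqP->|/IH H]; first exact: emin_l.
exact: ele_trans (emin_r _ _) H.
Qed.
Lemma eminl_ge (T : eqType) (f : T -> ext) r e : (forall y, y \in r -> ele e (f y)) ->
  ele e (eminl [seq f x | x <- r]).
Proof.
elim: r => [|a r IH] H /=; first by case: e {H}.
apply: ele_emin; first by apply: H; rewrite inE eqxx.
by apply: IH => y Hy; apply: H; rewrite inE Hy orbT.
Qed.
Lemma eminl_ex (T : eqType) (f : T -> ext) r :
  eminl [seq f x | x <- r] = Inf \/ exists2 x, x \in r & eminl [seq f x | x <- r] = f x.
Proof.
elim: r => [|a r IH] /=; first by left.
rewrite /emin; case: ifP => _; first by right; exists a; rewrite ?inE ?eqxx.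
case: IH => [->|[x xr ->]]; first by left.
by right; exists x; rewrite // inE xr orbT.
Qed.

Lemma eadd_mono c a b : ele a b -> ele (eadd c a) (eadd c b).
Proof. by case: c; case: a; case: b => //= x y t; rewrite lerD2l. Qed.
Lemma eadd_smono c a b : c <> Inf -> elt a b -> elt (eadd c a) (eadd c b).
Proof. by case: c; case: a; case: b => //= x y t _; rewrite ltrD2l. Qed.

Section Val.
Variables (R : nzRingType) (w : R -> ext) (hw : is_valuation w).

Lemma val0 : w 0 = Inf.
Proof. by case: hw => H _ _; apply/H. Qed.

Lemma val1 : w 1 = Fin 0.
Proof.
case: hw => H M _; have := M 1 1; rewrite mulr1.
case E: (w 1) => [a|] /=; last by move/H: E => /eqP; rewrite oner_eq0.
by case=> /(congr1 (fun t => t - a)); rewrite addrK subrr => <-.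
Qed.

Lemma valN1 : w (-1) = Fin 0.
Proof.
case: hw => H M _; have := M (-1) (-1); rewrite mulrNN mulr1 val1.
case E: (w (-1)) => [a|] //= [] /eqP.
by rewrite eq_sym -mulr2n -mulr_natr mulf_eq0 pnatr_eq0 orbF => /eqP->.
Qed.

Lemma valN x : w (- x) = w x.
Proof. case: hw => _ M _; rewrite -mulN1r M valN1; by case: (w x) => //= a; rewrite add0r. Qed.

Lemma val_sum_ge (I : eqType) (r : seq I) (f : I -> R) e :
  (forall i, i \in r -> ele e (w (f i))) -> ele e (w (\sum_(i <- r) f i)).
Proof.
case: hw => _ _ T.
elim: r => [|a r IH] H; first by rewrite big_nil val0; case: e {H}.
rewrite big_cons; apply: ele_trans (T _ _); apply: ele_emin; first by apply: H; rewrite inE eqxx.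
by apply: IH => i Hi; apply: H; rewrite inE Hi orbT.
Qed.

Lemma val_sum_gt (I : eqType) (r : seq I) (f : I -> R) c :
  (forall i, i \in r -> elt (Fin c) (w (f i))) -> elt (Fin c) (w (\sum_(i <- r) f i)).
Proof.
case: hw => _ _ T.
elim: r => [|a r IH] H; first by rewrite big_nil val0.
rewrite big_cons; apply: elt_ele_trans (T _ _) .
rewrite /emin; case: ifP => _; first by apply: H; rewrite inE eqxx.
by apply: IH => i Hi; apply: H; rewrite inE Hi orbT.
Qed.

Lemma val_strict a b : elt (w a) (w b) -> ele (w (a + b)) (w a).
Proof.
case: hw => _ _ T => Hab.
have := T (a + b) (- b); rewrite addrK valN /emin; case: ifP => // _ H.
by case: (elt_nle Hab H).
Qed.
End Val.
Lemma ele_anti x y : ele x y -> ele y x -> x = y.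
Proof. by case: x; case: y => //= a b H1 H2; congr Fin; apply/eqP; rewrite eq_le H1 H2. Qed.

Lemma valZ (K : fieldType) (L : fieldExtType K) (w : L -> ext) v :
  is_valuation w -> extends w v -> forall (k : K) y, w (k *: y) = eadd (v k) (w y).
Proof. by move=> [_ M _] E k y; rewrite -mulr_algl M E. Qed.

Lemma v_fin (K : fieldType) (L : fieldExtType K) (w : L -> ext) v :
  is_valuation w -> extends w v -> forall (k : K), k != 0 -> v k <> Inf.
Proof.
move=> [H _ _] E k k0; rewrite -E => /H /eqP; rewrite scaler_eq0 oner_eq0 orbF.
by rewrite (negbTE k0).
Qed.

Theorem mainTheorem8
  (K : fieldType) (L : fieldExtType K)
  (Lsep : separable 1%AS (fullv : {vspace L}))
  (v : K -> ext) (hv : is_normalized_discrete_valuation v)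
  (s : nat) (w : 'I_s -> L -> ext)
  (hw_val : forall i, is_valuation (w i))
  (hw_ext : forall i, extends (w i) v)
  (hw_inj : injective w)
  (hw_all : forall w' : L -> ext, is_valuation w' -> extends w' v ->
              exists i, w' = w i)
  (n : 'I_s -> nat) (B : forall i : 'I_s, 'I_(n i) -> L)
  (hB0 : forall i b, B i b != 0)
  (hBred : forall i, reduced (w i) (B i))
  (z : 'I_s -> L) (hz0 : forall i, z i != 0)
  (hz : forall i b j, j != i -> elt (w i (z i * B i b)) (w j (z i * B i b))) :
  reduced (wS w) (fun p : {i : 'I_s & 'I_(n i)} => z (tag p) * B (tag p) (tagged p)).
Proof.
move=> lam.
set F := fun p : {i : 'I_s & 'I_(n i)} => z (tag p) * B (tag p) (tagged p).
set t := fun p => lam p *: F p.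
set m := eminl _.
have key : forall p j, j != tag p -> lam p != 0 ->
    elt (w (tag p) (t p)) (w j (t p)).
  move=> [i b] j /= ji l0; rewrite /t !(valZ (hw_val _) (hw_ext _)).
  by apply: eadd_smono; [exact: (v_fin (hw_val i) (hw_ext i))|exact: hz].
have wSle : forall y j, ele (wS w y) (w j y).
  by move=> y j; rewrite /wS; apply: (eminl_le (fun j => w j y)); rewrite mem_enum.
have mle : forall p, ele m (wS w (t p)).
  by move=> p; rewrite /m; apply: (eminl_le (fun b => wS w (t b))); rewrite mem_enum.
apply: ele_anti; last first.
  rewrite /wS; apply: eminl_ge => j _.
  apply: val_sum_ge => // p _; exact: ele_trans (mle p) (wSle _ _).
have [mInf|[p0 _ hm]] : m = Inf \/ exists2 x, x \in enum {: {i : 'I_s & 'I_(n i)}} & m = wS w (t x) := eminl_ex (fun b => wS w (t b)) _.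
  by rewrite mInf; case: (wS w _).
rewrite hm; case Hc: (wS w (t p0)) => [c|]; last by case: (wS w _).
have mc : m = Fin c by rewrite hm.
case: p0 hm Hc => i0 b0 hm Hc.
set p0 := Tagged (fun i => 'I_(n i)) b0.
have C1 : ele (w i0 (t p0)) (Fin c).
  have [hI|[j _ hj]] := eminl_ex (fun j => w j (t p0)) (enum 'I_s).
    by move: Hc; rewrite /wS hI.
  rewrite -Hc /wS hj.
  have [->|jn] := eqVneq j i0; first exact: ele_refl.
  have [l0|l0] := eqVneq (lam p0) 0.
    by rewrite /t l0 scale0r val0 // val0 //.
  exact: elt_ele (key p0 j jn l0).
apply: ele_trans (wSle _ i0) _.
rewrite (bigID (fun p => tag p == i0)) /=.
set X0 := \sum_(p | _) _.
set Xr := \sum_(p | _) _.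
have C2 : elt (Fin c) (w i0 Xr).
  rewrite /Xr big_mkcond /=; apply: val_sum_gt => // p _.
  case: ifP => [ni|_]; last by rewrite val0 //.
  have [l0|l0] := eqVneq (lam p) 0; first by rewrite l0 scale0r val0 //.
  rewrite -mc; apply: ele_elt_trans (mle p) _.
  apply: ele_elt_trans (wSle _ (tag p)) _.
  by apply: key => //; rewrite eq_sym.
have C3 : ele (w i0 X0) (Fin c).
  apply: ele_trans C1.
  have -> : X0 = z i0 * \sum_(b : 'I_(n i0)) lam (Tagged (fun i => 'I_(n i)) b) *: B i0 b.
    rewrite mulr_sumr.
    transitivity (\sum_(i | i == i0) \sum_(b : 'I_(n i)) lam (Tagged (fun i => 'I_(n i)) b) *: (z i * B i b)); last first.
      by rewrite big_pred1_eq; apply: eq_bigr => b _; rewrite scalerAr.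
    rewrite sig_big_dep /=.
    by apply: eq_big => [[i b]|[i b] _] //=; rewrite andbT.
  case: (hw_val i0) => _ M _; rewrite M (hBred i0 (fun b => lam (Tagged (fun i => 'I_(n i)) b))).
  rewrite /t /F /p0 /= scalerAr M; apply: eadd_mono.
  by apply: (eminl_le (fun b => w i0 (lam (Tagged (fun i => 'I_(n i)) b) *: B i0 b))); rewrite mem_enum.
exact: (ele_trans (val_strict (hw_val i0) (ele_elt_trans C3 C2)) C3).
Qed.
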